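(* Let $\mathbf A\subset\mathbb Z^n_{\ge0}$ be a finite set not contained in any coordinate hyperplane $E_i=\{x_i=0\}$. Put $\Delta_i=\mathrm{Conv}(\mathbf A\setminus E_i)$ for $i=1,\dots,n$. Then: (1) $\Delta_1,\dots,\Delta_n$ are semi-interlaced in $(\mathrm{Conv}(\mathbf A),\mathbf A)$; (2) a proper face $K$ of $\mathrm{Conv}(\mathbf A)$ is a suture if and only if there is a coordinate subspace $E(K)$ with $K\subset E(K)$ and $\dim E(K)=\dim K$.
   Context: Let $A$ be a finite lattice set and $\mathbf P=\mathrm{Conv}(A)$. For a polytope $D$ with vertices in $A$, let $\mathcal D$ be the set of inclusion-maximal faces of $\mathbf P$ disjoint from $D$. $D$ is a daughter sub-polytope of $(\mathbf P,A)$ if these faces are pairwise disjoint and $D=\mathrm{Conv}(A\setminus\bigcup_{K\in\mathcal D}K)$. Daughter sub-polytopes $D_1,\dots,D_n$ are semi-interlaced in $(\mathbf P,A)$ if every face $\mathbf P^\gamma$, $\gamma\neq0$, is met by at least $\dim\mathbf P^\gamma$ of the $D_i$. Here $\mathbf P^\gamma$ is the face where $\gamma$ is minimal. A face is a suture if it is met by exactly as many $D_i$ as its dimension. *)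

(* Defs.v *)
From HB Require Import structures.
From mathcomp Require Import all_boot all_order all_algebra.
From mathcomp Require Import boolp reals.
Set Implicit Arguments. Unset Strict Implicit. Unset Printing Implicit Defensive.
Import Order.TTheory GRing.Theory Num.Theory.
Local Open Scope ring_scope.

Section Polytopes.
Variables (R : realType) (n : nat).
Local Notation V := 'rV[R]_n.

(* Conv (A ∩ P): convex combinations of the points of A satisfying P. *)
Definition convP (A : seq V) (P : V -> Prop) (x : V) : Prop :=
  exists w : 'I_(size A) -> R,
    [/\ forall i, 0 <= w i,
        forall i, w i != 0 -> P (A`_i),
        \sum_i w i = 1
      & x = \sum_i w i *: A`_i].

Definition conv (A : seq V) : V -> Prop := convP A (fun _ => True).

Definition pairing (g x : V) : R := \sum_i g 0 i * x 0 i.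

Definition face (A : seq V) (g : V) (x : V) : Prop :=
  conv A x /\ forall y, conv A y -> pairing g x <= pairing g y.

Definition is_face (A : seq V) (K : V -> Prop) : Prop :=
  exists g : V, forall x, K x <-> face A g x.

Definition proper_face (A : seq V) (K : V -> Prop) : Prop :=
  is_face A K /\ ~ (forall x, K x <-> conv A x).

(* affine dimension: least dimension of a linear subspace containing all
   differences x - y of points of S (i.e. dim of the direction of aff(S)). *)
Definition dimP (S : V -> Prop) (d : nat) : bool :=
  `[< exists U : {vspace V}, \dim U = d /\
        forall x y, S x -> S y -> (x - y) \in U >].

Lemma dimP_ex (S : V -> Prop) : exists d, dimP S d.
Proof.
exists (\dim (fullv : {vspace V})); apply/asboolP.
by exists fullv; split => // x y _ _; rewrite memvf.
Qed.

Definition affdim (S : V -> Prop) : nat := ex_minn (dimP_ex S).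

Definition maxdisj (A : seq V) (D K : V -> Prop) : Prop :=
  [/\ is_face A K,
      forall x, ~ (K x /\ D x)
    & forall K', is_face A K' -> (forall x, ~ (K' x /\ D x)) ->
        (forall x, K x -> K' x) -> forall x, K' x -> K x].

Definition daughter (A : seq V) (D : V -> Prop) : Prop :=
  (* the maximal faces disjoint from D are pairwise disjoint
     (two of them that meet coincide) *)
  (forall K1 K2, maxdisj A D K1 -> maxdisj A D K2 ->
     (exists x, K1 x /\ K2 x) -> forall x, K1 x <-> K2 x) /\
  (forall x, D x <-> convP A (fun a => ~ exists K, maxdisj A D K /\ K a) x).

Definition nmet (k : nat) (D : 'I_k -> V -> Prop) (K : V -> Prop) : nat :=
  #|[set i : 'I_k | `[< exists x, D i x /\ K x >] ]|.

Definition semi_interlaced (A : seq V) (k : nat) (D : 'I_k -> V -> Prop)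
  : Prop :=
  (forall i, daughter A (D i)) /\
  forall g : V, g != 0 -> (affdim (face A g) <= nmet D (face A g))%N.

Definition suture (A : seq V) (k : nat) (D : 'I_k -> V -> Prop)
  (K : V -> Prop) : Prop :=
  is_face A K /\ nmet D K = affdim K.

End Polytopes.

Definition embed (R : realType) (n : nat) (a : 'rV[nat]_n) : 'rV[R]_n :=
  map_mx (fun k : nat => k%:R) a.

(* Main.v *)
Require Import Defs.
From HB Require Import structures.
From mathcomp Require Import all_boot all_order all_algebra.
From mathcomp Require Import boolp reals.
Import Order.TTheory GRing.Theory Num.Theory.
Local Open Scope ring_scope.
Set Implicit Arguments. Unset Strict Implicit.

Lemma dim_coord (R : realType) (n : nat) (S : 'rV[R]_n -> Prop) (J : {set 'I_n}) :
  (forall x, S x -> forall i, i \notin J -> x 0 i = 0) -> dimP S #|J|.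
Proof.
move=> SJ; apply/asboolP.
pose T : n.-tuple 'rV[R]_n := [tuple delta_mx 0 j | j < n].
have E : forall j : 'I_n, T`_j = delta_mx 0 j.
  by move=> j; rewrite -tnth_nth tnth_mktuple.
have Tfree : free T.
  apply/freeP => k H i.
  have := congr1 (fun v : 'rV[R]_n => v 0 i) H; rewrite summxE mxE (bigD1 i) //=.
  rewrite E !mxE !eqxx mulr1 big1 ?addr0 // => j ji.
  by rewrite E !mxE eqxx eq_sym (negbTE ji) mulr0.
pose Y := [seq delta_mx 0 j | j <- enum J] : seq 'rV[R]_n.
have dinj : injective (fun j : 'I_n => delta_mx 0 j : 'rV[R]_n).
  move=> i j /rowP/(_ i); rewrite !mxE !eqxx /=.
  by case: eqP => // _ /eqP; rewrite oner_eq0.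
have Yfree : free Y.
  have TY : perm_eq (filter (mem Y) T) Y.
    apply: uniq_perm.
    - by apply: filter_uniq; rewrite map_inj_uniq ?enum_uniq.
    - by rewrite map_inj_uniq ?enum_uniq.
    move=> v; rewrite mem_filter; apply/andP/idP => [[]//|vY]; split => //.
    by case/mapP: vY => j _ ->; apply/mapP; exists j => //; rewrite mem_enum.
  by rewrite -(perm_free TY); apply: filter_free.
exists <<Y>>%VS; split.
  by move/eqP: Yfree => ->; rewrite size_map -cardE.
move=> x y Sx Sy.
rewrite (row_sum_delta (x - y)) (bigID (mem J)) /= [X in _ + X]big1 ?addr0; last first.
  by move=> j jJ; rewrite !mxE (SJ x Sx j jJ) (SJ y Sy j jJ) subrr scale0r.
apply: memv_suml => j jJ; apply: memvZ; apply: memv_span.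
by apply/mapP; exists j; rewrite ?mem_enum.
Qed.

Lemma pairing_sum (R : realType) n (g : 'rV[R]_n) m (w : 'I_m -> R)
  (a : 'I_m -> 'rV[R]_n) :
  pairing g (\sum_j w j *: a j) = \sum_j w j * pairing g (a j).
Proof.
rewrite /pairing.
under eq_bigr => i _ do rewrite summxE mulr_sumr.
rewrite exchange_big /=; apply: eq_bigr => j _.
rewrite mulr_sumr; apply: eq_bigr => i _; by rewrite mxE mulrCA.
Qed.

Lemma convP_pt (R : realType) n (A : seq 'rV[R]_n) (P : 'rV[R]_n -> Prop)
  (k : 'I_(size A)) : P A`_k -> convP A P A`_k.
Proof.
move=> Pk; exists (fun j => (j == k)%:R); split.
- by move=> j; rewrite ler0n.
- by move=> j; have [->|] := eqVneq j k => //; rewrite mulr0n eqxx.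
- by rewrite (bigD1 k) //= eqxx big1 ?addr0 // => j /negbTE ->.
- by rewrite (bigD1 k) //= eqxx scale1r big1 ?addr0 // => j /negbTE ->; rewrite scale0r.
Qed.

Lemma convP_mono (R : realType) n (A : seq 'rV[R]_n) (P Q : 'rV[R]_n -> Prop) x :
  (forall k : 'I_(size A), P A`_k -> Q A`_k) -> convP A P x -> convP A Q x.
Proof.
move=> PQ [w [w0 wP w1 xE]]; exists w; split => // k wk; exact/PQ/wP.
Qed.

Lemma supp_ex (R : realType) m (w : 'I_m -> R) :
  \sum_k w k = 1 -> exists k, w k != 0.
Proof.
move=> w1; case: (pickP (fun k => w k != 0)) => [k wk|none]; first by exists k.
move: w1; rewrite big1 => [/eqP|j _]; first by rewrite eq_sym oner_eq0.
by move: (none j) => /negbFE/eqP.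
Qed.

Lemma face_supp (R : realType) n (A : seq 'rV[R]_n) g x (w : 'I_(size A) -> R) :
  face A g x -> (forall k, 0 <= w k) -> \sum_k w k = 1 ->
  x = \sum_k w k *: A`_k -> forall k, w k != 0 -> face A g A`_k.
Proof.
move=> [cx mn] w0 w1 xE k wk.
have cA : forall j : 'I_(size A), conv A A`_j.
  by move=> j; apply: (@convP_pt _ _ _ (fun _ => True)).
have hge : forall j, 0 <= w j * (pairing g A`_j - pairing g x).
  by move=> j; rewrite mulr_ge0 // subr_ge0; apply: mn.
have S0 : \sum_j w j * (pairing g A`_j - pairing g x) = 0.
  rewrite (eq_bigr (fun j => w j * pairing g A`_j - w j * pairing g x));
    last by move=> j _; rewrite mulrBr.
  by rewrite sumrB -mulr_suml w1 mul1r -pairing_sum -xE subrr.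
have := @psumr_eq0P _ _ xpredT _ (fun j _ => hge j) S0 k isT.
move/eqP; rewrite mulf_eq0 (negbTE wk) /= subr_eq0 => /eqP pk.
split; first exact: cA.
by move=> y cy; rewrite pk; apply: mn.
Qed.

Lemma key (R : realType) n (A : seq 'rV[R]_n) (K : 'rV[R]_n -> Prop) g i :
  (forall x, K x <-> face A g x) ->
  (forall x, ~ (K x /\ convP A (fun y => y 0 i != 0) x)) ->
  forall x, K x -> x 0 i = 0.
Proof.
move=> KE dis x Kx; have fx := (KE x).1 Kx.
case: (fx.1) => w [w0 _ w1 xE].
rewrite xE summxE; apply: big1 => k _; rewrite mxE.
have [->|wk] := eqVneq (w k) 0; first by rewrite mul0r.
have Fk := face_supp fx w0 w1 xE wk.
have [->|nz] := eqVneq (A`_k 0 i) 0; first by rewrite mulr0.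
exfalso; apply: (dis A`_k); split; [exact/KE | exact: convP_pt].
Qed.

Lemma delta_pos (R : realType) n (A : seq 'rV[R]_n)
  (hA : forall (k : nat) i, 0 <= A`_k 0 i) i x :
  convP A (fun y => y 0 i != 0) x -> 0 < x 0 i.
Proof.
case=> w [w0 wP w1 xE]; have [k wk] := supp_ex w1.
rewrite xE summxE (bigD1 k) //= mxE.
have t0 : 0 < w k * A`_k 0 i.
  by rewrite mulr_gt0 // lt_def ?wk ?w0 ?wP // hA.
have : 0 <= \sum_(j | j != k) (w j *: A`_j) 0 i.
  by apply: sumr_ge0 => j _; rewrite mxE mulr_ge0.
move: t0; set a := _ * _; set b := \sum_(_ | _) _ => ha hb.
by apply: (lt_le_trans ha); rewrite lerDl.
Qed.

Lemma conv_ge0 (R : realType) n (A : seq 'rV[R]_n)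
  (hA : forall (k : nat) i, 0 <= A`_k 0 i) i x : conv A x -> 0 <= x 0 i.
Proof.
case=> w [w0 _ w1 ->]; rewrite summxE; apply: sumr_ge0 => j _.
by rewrite mxE mulr_ge0.
Qed.

Lemma pairing_delta (R : realType) n (i : 'I_n) (x : 'rV[R]_n) :
  pairing (delta_mx 0 i) x = x 0 i.
Proof.
rewrite /pairing (bigD1 i) //= mxE !eqxx mul1r big1 ?addr0 // => j ji.
by rewrite mxE eqxx (negbTE ji) mul0r.
Qed.

Lemma face_coord (R : realType) n (A : seq 'rV[R]_n)
  (hA : forall (k : nat) i, 0 <= A`_k 0 i) i (k : 'I_(size A)) :
  A`_k 0 i = 0 ->
  forall x, face A (delta_mx 0 i) x <-> conv A x /\ x 0 i = 0.
Proof.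
move=> ak x; split.
- case=> cx mn; split => //; apply/eqP; rewrite eq_le (conv_ge0 hA) // andbT.
  have := mn _ (@convP_pt _ _ _ (fun _ => True) k I).
  by rewrite !pairing_delta ak.
- case=> cx x0; split => // y cy; rewrite !pairing_delta x0; exact: conv_ge0.
Qed.

Lemma daughter_delta (R : realType) n (A : seq 'rV[R]_n)
  (hA : forall (k : nat) i, 0 <= A`_k 0 i) i :
  daughter A (convP A (fun y => y 0 i != 0)).
Proof.
set D := convP A _.
pose F := fun x => conv A x /\ x 0 i = 0.
have Fdis : forall x, ~ (F x /\ D x).
  by move=> x [[_ x0] Dx]; have := delta_pos hA Dx; rewrite x0 ltxx.
have keyK : forall K, maxdisj A D K -> forall x, K x -> F x.
  move=> K [[g KE] dis _] x Kx.
  by split; [exact: ((KE x).1 Kx).1 | exact: key KE dis x Kx].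
have mdF : forall k : 'I_(size A), A`_k 0 i = 0 -> maxdisj A D F.
  move=> k ak; split.
  - by exists (delta_mx 0 i) => x; split => H; apply/(face_coord hA ak).
  - exact: Fdis.
  - move=> K' [g KE] dis _ x K'x.
    by split; [exact: ((KE x).1 K'x).1 | exact: key KE dis x K'x].
have mdeq : forall K, maxdisj A D K -> forall k : 'I_(size A), A`_k 0 i = 0 ->
    forall x, K x <-> F x.
  move=> K mK k ak x; split; first exact: keyK.
  case: (mdF k ak) => Ff _ _.
  case: mK => Kf Kdis Kmax; apply: (Kmax F) => //.
  exact: (keyK K (And3 Kf Kdis Kmax)).
have supp : forall K, maxdisj A D K -> forall x, K x ->
    exists k : 'I_(size A), A`_k 0 i = 0.
  move=> K [[g KE] dis _] x Kx; have fx := (KE x).1 Kx.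
  case: (fx.1) => w [w0 _ w1 xE]; have [k wk] := supp_ex w1.
  by exists k; apply: (key KE dis); apply/KE; exact: (face_supp fx w0 w1 xE wk).
split.
- move=> K1 K2 m1 m2 [x [K1x _]] y; have [k ak] := supp _ m1 x K1x.
  by split => H; [apply/(mdeq _ m2 k ak)/(mdeq _ m1 k ak) |
                  apply/(mdeq _ m1 k ak)/(mdeq _ m2 k ak)].
- move=> x; split; apply: convP_mono => k.
  + move=> nz [K [mK Kk]]; case: mK => _ dis _; apply: (dis A`_k); split => //.
    exact: convP_pt.
  + move=> nQ; apply/negP => /eqP ak; apply: nQ; exists F; split.
      exact: mdF k ak.
    by split => //; exact: (@convP_pt _ _ _ (fun _ => True) k I).
Qed.

Lemma dim_le_nmet (R : realType) n (A : seq 'rV[R]_n) (K : 'rV[R]_n -> Prop) g :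
  (forall x, K x <-> face A g x) ->
  leq (affdim K) (nmet (fun i : 'I_n => convP A (fun y => y 0 i != 0)) K).
Proof.
move=> KE; rewrite /affdim /nmet; case: ex_minnP => m _ hm; apply: hm.
apply: dim_coord => x Kx i iJ; apply: (key KE) _ x Kx => y [Ky Dy].
by move: iJ; rewrite inE => /negP; apply; apply/asboolP; exists y.
Qed.

Unset Implicit Arguments. Set Strict Implicit.

Theorem lemma6p1 (R : realType) (n : nat) (A : seq 'rV[nat]_n)
  (hA : forall i : 'I_n, exists2 a, a \in A & a 0 i != 0%N) :
  let Ar := map (@embed R n) A in
  let Delta := fun (i : 'I_n) => convP Ar (fun x => x 0 i != 0) in
  semi_interlaced Ar Delta /\
  (forall K : 'rV[R]_n -> Prop, proper_face Ar K ->
     (suture Ar Delta K <->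
      exists J : {set 'I_n},
        (forall x, K x -> forall i, i \notin J -> x 0 i = 0) /\
        #|J| = affdim K)).
Proof.
move=> Ar Delta.
have hAr : forall (k : nat) i, 0 <= Ar`_k 0 i.
  move=> k i; rewrite /Ar; case: (ltnP k (size A)) => hk.
    by rewrite (nth_map (0 : 'rV[nat]_n)) // mxE ler0n.
  by rewrite nth_default ?size_map // mxE.
split.
  split; first by move=> i; exact: daughter_delta.
  by move=> g _; exact: (dim_le_nmet (K := face Ar g) (g := g)).
move=> K [[g KE] _]; split.
- case=> _ eq; exists [set i | `[< exists x, Delta i x /\ K x >]]; split.
    move=> x Kx i iJ; apply: (key KE) _ x Kx => y [Ky Dy].
    by move: iJ; rewrite inE => /negP; apply; apply/asboolP; exists y.
  by rewrite -eq.
- case=> J [KJ cJ]; split; first by exists g.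
  apply/eqP; rewrite eqn_leq; apply/andP; split; last exact: (dim_le_nmet KE).
  rewrite -cJ; apply: subset_leq_card; apply/subsetP => i.
  rewrite inE => /asboolP [x [Dx Kx]]; apply/negPn/negP => iJ.
  by have := delta_pos hAr Dx; rewrite (KJ x Kx i iJ) ltxx.
Qed.
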